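(* Let $G$ be a full, flexible group of homeomorphisms of the Cantor set $\{0,1\}^\omega$. Suppose that: (1) for all $g\in G$ both $(1,g)$ and $(g,1)$ lie in $G$, and every element of $G$ supported on $I_0$ or on $I_1$ has this form; (2) for all $g\in G$ there exists $h\in G$ with $h=(g,h)$; and (3) the homeomorphism $x_0$ lies in $G$. Then $G$ is simple.
   Context: $I_\alpha$ is the set of sequences beginning with the finite word $\alpha$. $G$ is full if every homeomorphism $h$ of $\{0,1\}^\omega$ that locally agrees with $G$ (each point has a neighborhood $U$ and some $g\in G$ with $h|_U=g|_U$) belongs to $G$. $G$ is flexible if for every pair $E_1,E_2$ of proper nonempty clopen subsets there is $g\in G$ with $g(E_1)\subseteq E_2$. For homeomorphisms $f,g$, $(f,g)$ is the homeomorphism with $(f,g)(0\zeta)=0f(\zeta)$, $(f,g)(1\zeta)=1g(\zeta)$; $1$ denotes the identity. An element is supported on $E$ if it is the identity off $E$. $x_0$ is the homeomorphism (first generator of Thompson's group $F$) with $x_0(00\zeta)=0\zeta$, $x_0(01\zeta)=10\zeta$, $x_0(1\zeta)=11\zeta$ for all $\zeta\in\{0,1\}^\omega$. *)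

(* Defs.v *)
(* The Cantor space {0,1}^omega is nat -> bool, with the
   product topology written out via cylinder (finite-prefix) neighbourhoods.
   Bit 0 is [false], bit 1 is [true]. *)

Definition cantor := nat -> bool.

Definition agree (n : nat) (x y : cantor) : Prop := forall k, k < n -> x k = y k.

Definition is_open (U : cantor -> Prop) : Prop :=
  forall x, U x -> exists n, forall y, agree n x y -> U y.

Definition is_clopen (U : cantor -> Prop) : Prop :=
  is_open U /\ is_open (fun x => ~ U x).

Definition cont (f : cantor -> cantor) : Prop :=
  forall x n, exists m, forall y, agree m x y -> agree n (f x) (f y).

Definition homeo (f : cantor -> cantor) : Prop :=
  cont f /\ exists g, cont g /\ (forall x, g (f x) = x) /\ (forall x, f (g x) = x).

Definition cid : cantor -> cantor := fun x => x.

Definition comp (f g : cantor -> cantor) : cantor -> cantor := fun x => f (g x).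

Definition inverse_pair (f g : cantor -> cantor) : Prop :=
  (forall x, f (g x) = x) /\ (forall x, g (f x) = x).

Definition homeo_group (G : (cantor -> cantor) -> Prop) : Prop :=
  (forall g, G g -> homeo g) /\ G cid /\
  (forall f g, G f -> G g -> G (comp f g)) /\
  (forall g, G g -> exists h, G h /\ inverse_pair g h).

Definition subgroup (N G : (cantor -> cantor) -> Prop) : Prop :=
  (forall n, N n -> G n) /\ N cid /\
  (forall f g, N f -> N g -> N (comp f g)) /\
  (forall g, N g -> exists h, N h /\ inverse_pair g h).

Definition normal_subgroup (N G : (cantor -> cantor) -> Prop) : Prop :=
  subgroup N G /\
  (forall n g h, N n -> G g -> G h -> inverse_pair g h -> N (comp g (comp n h))).

Definition simple_group (G : (cantor -> cantor) -> Prop) : Prop :=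
  (exists g, G g /\ g <> cid) /\
  forall N, normal_subgroup N G ->
    (forall n, N n -> n = cid) \/ (forall g, G g -> N g).

Definition full (G : (cantor -> cantor) -> Prop) : Prop :=
  forall h, homeo h ->
    (forall x, exists U, is_open U /\ U x /\
        exists g, G g /\ forall y, U y -> h y = g y) ->
    G h.

Definition flexible (G : (cantor -> cantor) -> Prop) : Prop :=
  forall E1 E2 : cantor -> Prop,
    is_clopen E1 -> (exists x, E1 x) -> (exists x, ~ E1 x) ->
    is_clopen E2 -> (exists x, E2 x) -> (exists x, ~ E2 x) ->
    exists g, G g /\ forall x, E1 x -> E2 (g x).

Definition ccons (b : bool) (z : cantor) : cantor :=
  fun n => match n with 0 => b | S k => z k end.

Definition ctail (z : cantor) : cantor := fun n => z (S n).

(* (f,g)(0 z) = 0 f(z), (f,g)(1 z) = 1 g(z) *)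
Definition pairh (f g : cantor -> cantor) : cantor -> cantor :=
  fun z => if z 0 then ccons true (g (ctail z)) else ccons false (f (ctail z)).

Definition I0 : cantor -> Prop := fun z => z 0 = false.
Definition I1 : cantor -> Prop := fun z => z 0 = true.

Definition supported_on (g : cantor -> cantor) (E : cantor -> Prop) : Prop :=
  forall x, ~ E x -> g x = x.

Definition x0 : cantor -> cantor :=
  fun z =>
    if z 0 then ccons true (ccons true (ctail z))
    else if z 1 then ccons true (ccons false (ctail (ctail z)))
    else ccons false (ctail (ctail z)).

(* Main.v *)
Require Import Defs.
From Stdlib Require Import FunctionalExtensionality Classical ClassicalEpsilon Arith Lia.

Lemma ccons_tail z : ccons (z 0) (ctail z) = z.
Proof. extensionality n; destruct n; reflexivity. Qed.

Lemma ccons_inj b c u v : ccons b u = ccons c v -> b = c /\ u = v.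
Proof. intro H. split. exact (equal_f H 0). extensionality n. exact (equal_f H (S n)). Qed.

Lemma pairh_F f g u : pairh f g (ccons false u) = ccons false (f u). Proof. reflexivity. Qed.
Lemma pairh_T f g u : pairh f g (ccons true u) = ccons true (g u). Proof. reflexivity. Qed.
Lemma x0_FF u : x0 (ccons false (ccons false u)) = ccons false u. Proof. reflexivity. Qed.
Lemma x0_FT u : x0 (ccons false (ccons true u)) = ccons true (ccons false u). Proof. reflexivity. Qed.
Lemma x0_T u : x0 (ccons true u) = ccons true (ccons true u). Proof. reflexivity. Qed.

Lemma agree_mono n m x y : n <= m -> agree m x y -> agree n x y.
Proof. intros Hnm H k Hk. apply H. lia. Qed.
Lemma agree_sym n x y : agree n x y -> agree n y x.
Proof. intros H k Hk. symmetry. apply H, Hk. Qed.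
Lemma agree_trans n x y z : agree n x y -> agree n y z -> agree n x z.
Proof. intros H1 H2 k Hk. rewrite (H1 k Hk). apply H2, Hk. Qed.

Lemma open_ext (P Q : cantor -> Prop) : (forall x, P x <-> Q x) -> is_open P -> is_open Q.
Proof. intros H HP x Qx. destruct (HP x (proj2 (H x) Qx)) as [n Hn]. exists n.
  intros y Hy. apply H, Hn, Hy. Qed.

Lemma open_and (P Q : cantor -> Prop) : is_open P -> is_open Q -> is_open (fun x => P x /\ Q x).
Proof. intros HP HQ x [Px Qx]. destruct (HP x Px) as [n Hn]; destruct (HQ x Qx) as [m Hm].
  exists (max n m). intros y Hy. split.
  - apply Hn. apply (agree_mono _ (max n m)); [lia|exact Hy].
  - apply Hm. apply (agree_mono _ (max n m)); [lia|exact Hy]. Qed.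

Lemma open_or (P Q : cantor -> Prop) : is_open P -> is_open Q -> is_open (fun x => P x \/ Q x).
Proof. intros HP HQ x [Px|Qx].
  - destruct (HP x Px) as [n Hn]. exists n. intros y Hy. left. apply Hn, Hy.
  - destruct (HQ x Qx) as [n Hn]. exists n. intros y Hy. right. apply Hn, Hy. Qed.

Lemma open_pre (f : cantor -> cantor) (U : cantor -> Prop) : cont f -> is_open U -> is_open (fun x => U (f x)).
Proof. intros Hf HU x Ux. destruct (HU _ Ux) as [n Hn]. destruct (Hf x n) as [m Hm].
  exists m. intros y Hy. apply Hn, Hm, Hy. Qed.

Lemma cyl_open M x : is_open (agree M x).
Proof. intros y Hy. exists M. intros w Hw. eapply agree_trans; eauto. Qed.

Lemma cyl_copen M x : is_open (fun y => ~ agree M x y).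
Proof. intros y Hy. exists M. intros w Hw Hxw. apply Hy.
  eapply agree_trans. exact Hxw. apply agree_sym, Hw. Qed.

Lemma cyl_clopen M x : is_clopen (agree M x).
Proof. split; [apply cyl_open|apply cyl_copen]. Qed.

Lemma cyl_out M x : 1 <= M -> exists y, ~ agree M x y.
Proof. intro HM. exists (ccons (negb (x 0)) (ctail x)). intro H.
  specialize (H 0 ltac:(lia)). simpl in H. destruct (x 0); discriminate. Qed.

Lemma local_cont (h : cantor -> cantor) :
 (forall x, exists U, is_open U /\ U x /\ exists g, cont g /\ forall y, U y -> h y = g y) -> cont h.
Proof. intros H x n. destruct (H x) as (U & HU & Ux & g & Hg & Hgy).
 destruct (HU x Ux) as [m1 Hm1]. destruct (Hg x n) as [m2 Hm2].
 exists (max m1 m2). intros y Hy. rewrite (Hgy x Ux), (Hgy y).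
 - apply Hm2. apply (agree_mono _ (max m1 m2)); [lia|exact Hy].
 - apply Hm1. apply (agree_mono _ (max m1 m2)); [lia|exact Hy]. Qed.

Lemma comm_disj (f g : cantor -> cantor) (E F : cantor -> Prop) :
  (forall u v, f u = f v -> u = v) -> (forall u v, g u = g v -> u = v) ->
  (forall z, E z -> ~ F z) -> supported_on f E -> supported_on g F ->
  forall z, f (g z) = g (f z).
Proof.
  intros If Ig D Sf Sg z. destruct (classic (E z)) as [Ez|Ez].
  - rewrite (Sg z (D z Ez)).
    assert (Efz : E (f z)).
    { apply NNPP; intro N. assert (fz : f z = z) by (apply If; apply Sf, N).
      apply N. rewrite fz. exact Ez. }
    rewrite (Sg (f z) (D _ Efz)). reflexivity.
  - rewrite (Sf z Ez).
    assert (Egz : ~ E (g z)).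
    { intro Egz. assert (gz : g z = z) by (apply Ig; apply Sg, D, Egz).
      apply Ez. rewrite <- gz. exact Egz. }
    apply Sf, Egz. Qed.

Lemma supp_inv a a' E : inverse_pair a a' -> supported_on a E -> supported_on a' E.
Proof. intros [H1 H2] S z Hz. rewrite <- (S z Hz) at 1. apply H2. Qed.
Lemma stepA (G N : (cantor->cantor)->Prop) (E : cantor -> Prop) n n' a a' b b' :
 normal_subgroup N G -> N n -> N n' -> inverse_pair n n' ->
 (forall y, E y -> ~ E (n y)) ->
 G a -> G a' -> inverse_pair a a' -> G b -> G b' -> inverse_pair b b' ->
 supported_on a E -> supported_on b E ->
 N (comp a (comp b (comp a' b'))).
Proof.
  intros HN Nn Nn' Hnn' HE Ga Ga' Haa' Gb Gb' Hbb' Sa Sb.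
  destruct HN as [[HNG [HNid [HNc HNi]]] HNn].
  assert (Hc : N (comp b (comp n (comp b' n')))).
  { exact (HNc _ _ (HNn _ _ _ Nn Gb Gb' Hbb') Nn'). }
  assert (Hc' : N (comp n (comp b (comp n' b')))).
  { exact (HNc _ _ Nn (HNn _ _ _ Nn' Gb Gb' Hbb')). }
  assert (Hd := HNc _ _ (HNn _ a a' Hc Ga Ga' Haa') Hc').
  replace (comp a (comp b (comp a' b'))) with
    (comp (comp a (comp (comp b (comp n (comp b' n'))) a')) (comp n (comp b (comp n' b')))); [exact Hd|].
  destruct Hnn' as [n1 n2]. destruct Haa' as [a1 a2]. destruct Hbb' as [b1 b2].
  assert (Sa' := supp_inv a a' E (conj a1 a2) Sa).
  assert (Sb' := supp_inv b b' E (conj b1 b2) Sb).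
  assert (Hcm : forall u, a' (n (b' (n' u))) = n (b' (n' (a' u)))).
  { apply (comm_disj a' (fun y => n (b' (n' y))) E (fun y => E (n' y))).
    - intros u v Huv. rewrite <- (a1 u), <- (a1 v), Huv. reflexivity.
    - intros u v Huv. assert (H := f_equal (fun w => n (b (n' w))) Huv). simpl in H.
      rewrite !n2, !b1, !n1 in H. exact H.
    - intros z Ez Ez'. apply (HE _ Ez'). rewrite n1. exact Ez.
    - exact Sa'.
    - intros y Hy. rewrite (Sb' _ Hy). apply n1. }
  extensionality z. unfold comp. f_equal. f_equal.
  rewrite <- Hcm. rewrite n2, b2, n1. reflexivity.
Qed.

Definition comm_prop (G N : (cantor->cantor)->Prop) (E : cantor -> Prop) :=
  forall a a' b b', G a -> G a' -> inverse_pair a a' -> G b -> G b' -> inverse_pair b b' ->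
   supported_on a E -> supported_on b E -> N (comp a (comp b (comp a' b'))).

Lemma stepB (G N : (cantor->cantor)->Prop) (E1 E : cantor -> Prop) t t' :
  homeo_group G -> normal_subgroup N G -> comm_prop G N E ->
  G t -> G t' -> inverse_pair t t' -> (forall y, E1 y -> E (t y)) -> comm_prop G N E1.
Proof.
  intros HG HN HC Gt Gt' [t1 t2] Ht a a' b b' Ga Ga' [a1 a2] Gb Gb' [b1 b2] Sa Sb.
  destruct HG as (Hhom & Hid & Hcomp & Hinv).
  assert (Hsupp : forall c, supported_on c E1 -> supported_on (comp t (comp c t')) E).
  { intros c Sc y Hy. unfold comp. rewrite Sc. apply t1.
    intro H. apply Hy. rewrite <- (t1 y). apply Ht, H. }
  assert (Ia : inverse_pair (comp t (comp a t')) (comp t (comp a' t'))).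
  { split; intro x; unfold comp; rewrite t2; [rewrite a1|rewrite a2]; apply t1. }
  assert (Ib : inverse_pair (comp t (comp b t')) (comp t (comp b' t'))).
  { split; intro x; unfold comp; rewrite t2; [rewrite b1|rewrite b2]; apply t1. }
  assert (HX := HC (comp t (comp a t')) (comp t (comp a' t')) (comp t (comp b t')) (comp t (comp b' t'))
     (Hcomp _ _ Gt (Hcomp _ _ Ga Gt')) (Hcomp _ _ Gt (Hcomp _ _ Ga' Gt')) Ia
     (Hcomp _ _ Gt (Hcomp _ _ Gb Gt')) (Hcomp _ _ Gt (Hcomp _ _ Gb' Gt')) Ib
     (Hsupp a Sa) (Hsupp b Sb)).
  destruct HN as [_ HNn].
  assert (HY := HNn _ t' t HX Gt' Gt (conj t2 t1)).
  replace (comp a (comp b (comp a' b'))) with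
    (comp t' (comp (comp (comp t (comp a t')) (comp (comp t (comp b t')) (comp (comp t (comp a' t')) (comp t (comp b' t'))))) t)); [exact HY|].
  extensionality z. unfold comp. rewrite !t2. reflexivity.
Qed.
Definition p1 : cantor := fun _ => true.

Lemma pairh_cid_supp f : supported_on (pairh cid f) (agree 1 p1).
Proof. intros y Hy. assert (H0 : y 0 = false).
  { destruct (y 0) eqn:E; auto. exfalso; apply Hy. intros k Hk.
    assert (k = 0) by lia. subst. unfold p1. auto. }
  unfold pairh. rewrite H0. extensionality n. destruct n; simpl; auto. Qed.

Lemma pairh_cid_comp f g : pairh cid (comp f g) = comp (pairh cid f) (pairh cid g).
Proof. extensionality z. unfold pairh, comp. destruct (z 0); reflexivity. Qed.

Lemma Ak_in (G N : (cantor->cantor)->Prop) : homeo_group G ->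
  (forall g, G g -> G (pairh cid g) /\ G (pairh g cid)) ->
  (forall g, G g -> exists h, G h /\ h = pairh g h) -> G x0 ->
  comm_prop G N (agree 1 p1) ->
  forall k, G k -> N (pairh cid (pairh cid (pairh (pairh k cid) cid))).
Proof.
  intros HG H1 H4 Hx0 HC k Gk.
  destruct HG as (Hhom & Hid & Hcomp & Hinv).
  destruct (H4 (pairh k cid) (proj2 (H1 k Gk))) as [h [Gh Hh]].
  assert (hL : forall u, h (ccons false u) = ccons false (pairh k cid u)).
  { intro u. exact (equal_f Hh (ccons false u)). }
  assert (hR : forall u, h (ccons true u) = ccons true (h u)).
  { intro u. exact (equal_f Hh (ccons true u)). }
  set (A := pairh cid (pairh (pairh k cid) cid)).
  assert (key : forall w, pairh cid h (x0 w) = A (x0 (pairh cid h w))).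
  { intro w. rewrite <- (ccons_tail w). destruct (w 0).
    - rewrite x0_T, !pairh_T, hR, x0_T. reflexivity.
    - rewrite <- (ccons_tail (ctail w)). destruct (ctail w 0).
      + rewrite x0_FT, pairh_T, hL, pairh_F. unfold cid. rewrite x0_FT. reflexivity.
      + rewrite x0_FF, pairh_F, pairh_F. unfold cid. rewrite x0_FF. reflexivity. }
  set (P := pairh cid (pairh cid h)). set (Q := pairh cid x0).
  assert (GP : G P) by (apply H1, H1, Gh).
  assert (GQ : G Q) by (apply H1, Hx0).
  destruct (Hinv P GP) as [P' [GP' IP]]. destruct (Hinv Q GQ) as [Q' [GQ' IQ]].
  assert (HPQ : forall z, P (Q z) = pairh cid A (Q (P z))).
  { intro z. rewrite <- (ccons_tail z). destruct (z 0).
    - unfold P, Q. rewrite !pairh_T. rewrite key. reflexivity.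
    - reflexivity. }
  replace (pairh cid A) with (comp P (comp Q (comp P' Q'))).
  - apply HC; auto. apply pairh_cid_supp. apply pairh_cid_supp.
  - destruct IP as [P1 P2]. destruct IQ as [Q1 Q2].
    extensionality z. unfold comp. rewrite HPQ, P1, Q1. reflexivity.
Qed.
Definition p4 : cantor := ccons true (ccons true (ccons false (ccons false (fun _ => false)))).

Lemma decomp4 (G : (cantor->cantor)->Prop) :
  (forall f, G f -> supported_on f I0 -> exists g, G g /\ f = pairh g cid) ->
  (forall f, G f -> supported_on f I1 -> exists g, G g /\ f = pairh cid g) ->
  forall g, G g -> supported_on g (agree 4 p4) ->
  exists k, G k /\ g = pairh cid (pairh cid (pairh (pairh k cid) cid)).
Proof.
  intros H2 H3 g Gg Sg.
  destruct (H3 g Gg) as [g1 [Gg1 E1]].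
  { intros y Hy. apply Sg. intro Ha. apply Hy. unfold I1. symmetry. exact (Ha 0 ltac:(lia)). }
  destruct (H3 g1 Gg1) as [g2 [Gg2 E2]].
  { intros y Hy. assert (H := Sg (ccons true y)).
    rewrite E1 in H. apply ccons_inj in H. apply H.
    intro Ha. apply Hy. unfold I1. symmetry. exact (Ha 1 ltac:(lia)). }
  destruct (H2 g2 Gg2) as [g3 [Gg3 E3]].
  { intros y Hy. assert (H := Sg (ccons true (ccons true y))).
    rewrite E1, E2 in H. apply ccons_inj in H. destruct H as [_ H]. apply ccons_inj in H. apply H.
    intro Ha. apply Hy. unfold I0. symmetry. exact (Ha 2 ltac:(lia)). }
  destruct (H2 g3 Gg3) as [k [Gk E4]].
  { intros y Hy. assert (H := Sg (ccons true (ccons true (ccons false y)))).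
    rewrite E1, E2, E3 in H. apply ccons_inj in H. destruct H as [_ H]. apply ccons_inj in H.
    destruct H as [_ H]. apply ccons_inj in H. apply H.
    intro Ha. apply Hy. unfold I0. symmetry. exact (Ha 3 ltac:(lia)). }
  exists k. split; auto. subst. reflexivity.
Qed.

Lemma supp_in (G N : (cantor->cantor)->Prop) : homeo_group G -> normal_subgroup N G -> flexible G ->
  (forall f, G f -> supported_on f I0 -> exists g, G g /\ f = pairh g cid) ->
  (forall f, G f -> supported_on f I1 -> exists g, G g /\ f = pairh cid g) ->
  (forall k, G k -> N (pairh cid (pairh cid (pairh (pairh k cid) cid)))) ->
  forall f E, G f -> is_clopen E -> (exists x, E x) -> (exists x, ~ E x) -> supported_on f E -> N f.
Proof.
  intros HG HN Hflex H2 H3 HAk f E Gf CE NE PE Sf.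
  destruct HG as (Hhom & Hid & Hcomp & Hinv).
  destruct (Hflex E (agree 4 p4) CE NE PE (cyl_clopen 4 p4) (ex_intro (fun y => agree 4 p4 y) p4 (fun k _ => eq_refl))
     (cyl_out 4 p4 ltac:(lia))) as [t [Gt Ht]].
  destruct (Hinv t Gt) as [t' [Gt' [t1 t2]]].
  assert (Gg : G (comp t (comp f t'))) by (apply Hcomp; auto).
  destruct (decomp4 G H2 H3 _ Gg) as [k [Gk Ek]].
  { intros y Hy. unfold comp. rewrite Sf. apply t1.
    intro H. apply Hy. rewrite <- (t1 y). apply Ht, H. }
  destruct HN as [_ HNn].
  assert (HY := HNn _ t' t (HAk k Gk) Gt' Gt (conj t2 t1)).
  rewrite <- Ek in HY.
  replace f with (comp t' (comp (comp t (comp f t')) t)); [exact HY|].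
  extensionality z. unfold comp. rewrite !t2. reflexivity.
Qed.
Lemma ne_point (f : cantor -> cantor) : f <> cid -> exists x j, f x j <> x j.
Proof.
  intro Hne. apply NNPP. intro Hno. apply Hne. extensionality x. extensionality j.
  apply NNPP. intro H. apply Hno. exists x, j. exact H.
Qed.

Lemma all_in (G N : (cantor->cantor)->Prop) : homeo_group G -> normal_subgroup N G -> full G ->
  (forall f E, G f -> is_clopen E -> (exists x, E x) -> (exists x, ~ E x) -> supported_on f E -> N f) ->
  forall g, G g -> N g.
Proof.
  intros HG HN Hfull Hsupp g Gg.
  pose proof HG as (Hhom & Hid & Hcomp & Hinv).
  pose proof HN as [[HNG [HNid [HNc HNi]]] HNn].
  destruct (classic (g = cid)) as [->|Hne]; [exact HNid|].
  destruct (ne_point g Hne) as [x [j Hj]].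
  destruct (Hhom g Gg) as [Hcg _]. destruct (Hcg x (S j)) as [m Hm].
  set (M := max m (S (S j))).
  set (A := agree M x).
  destruct (Hinv g Gg) as [gi [Ggi [g1 g2]]].
  destruct (Hhom gi Ggi) as [Hcgi _].
  assert (F1 : forall y, A y -> ~ A (g y)).
  { intros y Hy Hgy. assert (H := Hm y (agree_mono m M x y ltac:(unfold M; lia) Hy)).
    specialize (H j ltac:(lia)). specialize (Hgy j ltac:(unfold M; lia)). congruence. }
  set (yout := fun n => if Nat.eqb n (S j) then negb (x n) else x n).
  assert (Y1 : ~ A yout).
  { intro H. specialize (H (S j) ltac:(unfold M; lia)). unfold yout in H.
    rewrite Nat.eqb_refl in H. destruct (x (S j)); discriminate. }
  assert (Y2 : ~ A (gi yout)).
  { intro H. assert (H' := Hm _ (agree_mono m M x _ ltac:(unfold M; lia) H)).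
    specialize (H' j ltac:(lia)). rewrite g1 in H'. unfold yout in H'.
    replace (Nat.eqb j (S j)) with false in H' by (symmetry; apply Nat.eqb_neq; lia).
    congruence. }
  set (s := fun z => if excluded_middle_informative (A z) then g z
                     else if excluded_middle_informative (A (gi z)) then gi z else z).
  assert (Ss : forall z, s (s z) = z).
  { intro z. unfold s at 2. destruct (excluded_middle_informative (A z)) as [Az|Az].
    - unfold s. destruct (excluded_middle_informative (A (g z))) as [Agz|Agz].
      + exfalso. exact (F1 z Az Agz).
      + rewrite g2. destruct (excluded_middle_informative (A z)); tauto.
    - destruct (excluded_middle_informative (A (gi z))) as [Agz|Agz].
      + unfold s. destruct (excluded_middle_informative (A (gi z))); [|tauto]. apply g1.
      + unfold s. destruct (excluded_middle_informative (A z)); [tauto|].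
        destruct (excluded_middle_informative (A (gi z))); tauto. }
  assert (OA : is_open A) by apply cyl_open.
  assert (OnA : is_open (fun y => ~ A y)) by apply cyl_copen.
  assert (Sloc : forall z, exists U, is_open U /\ U z /\ exists f, G f /\ forall y, U y -> s y = f y).
  { intro z. destruct (excluded_middle_informative (A z)) as [Az|Az].
    - exists A. split; [exact OA|split; [exact Az|]]. exists g. split; auto.
      intros y Ay. unfold s. destruct (excluded_middle_informative (A y)); tauto.
    - destruct (excluded_middle_informative (A (gi z))) as [Agz|Agz].
      + exists (fun y => ~ A y /\ A (gi y)). split; [apply open_and; [exact OnA| apply open_pre; auto]|].
        split; [auto|]. exists gi. split; auto. intros y [H1 H2]. unfold s.
        destruct (excluded_middle_informative (A y)); [tauto|].
        destruct (excluded_middle_informative (A (gi y))); tauto.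
      + exists (fun y => ~ A y /\ ~ A (gi y)).
        split; [apply open_and; [exact OnA| apply (open_pre gi (fun y => ~ A y)); auto]|].
        split; [auto|]. exists cid. split; auto. intros y [H1 H2]. unfold s.
        destruct (excluded_middle_informative (A y)); [tauto|].
        destruct (excluded_middle_informative (A (gi y))); [tauto|]. reflexivity. }
  assert (Gs : G s).
  { apply Hfull; [|exact Sloc]. split.
    - apply local_cont. intro z. destruct (Sloc z) as (U & HU & Uz & f & Gf & Hf).
      exists U. split; auto. split; auto. exists f. split; auto. apply (Hhom f Gf).
    - exists s. split; [|split; exact Ss].
      apply local_cont. intro z. destruct (Sloc z) as (U & HU & Uz & f & Gf & Hf).
      exists U. split; auto. split; auto. exists f. split; auto. apply (Hhom f Gf). }
  assert (Ns : N s).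
  { apply (Hsupp s (fun y => A y \/ A (gi y))); auto.
    - split. apply open_or; auto. apply open_pre; auto.
      apply (open_ext (fun y => ~ A y /\ ~ A (gi y))). { intro y. tauto. }
      apply open_and; auto. apply (open_pre gi (fun y => ~ A y)); auto.
    - exists x. left. intros k _. reflexivity.
    - exists yout. tauto.
    - intros y Hy. unfold s. destruct (excluded_middle_informative (A y)); [tauto|].
      destruct (excluded_middle_informative (A (gi y))); [tauto|]. reflexivity. }
  assert (Nsg : N (comp s g)).
  { apply (Hsupp (comp s g) (fun y => ~ A y)); auto.
    - split; auto. apply (open_ext A); auto. intro y; tauto.
    - exists yout. exact Y1.
    - exists x. intro H. apply H. intros k _. reflexivity.
    - intros y Hy. apply NNPP in Hy. unfold comp, s.
      destruct (excluded_middle_informative (A (g y))) as [H|H]; [exfalso; exact (F1 y Hy H)|].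
      rewrite g2. destruct (excluded_middle_informative (A y)); tauto. }
  replace g with (comp s (comp s g)); [exact (HNc _ _ Ns Nsg)|].
  extensionality z. unfold comp. apply Ss.
Qed.

Theorem theorem2p10 (G : (cantor -> cantor) -> Prop) :
  homeo_group G -> full G -> flexible G ->
  (forall g, G g -> G (pairh cid g) /\ G (pairh g cid)) ->
  (forall f, G f -> supported_on f I0 -> exists g, G g /\ f = pairh g cid) ->
  (forall f, G f -> supported_on f I1 -> exists g, G g /\ f = pairh cid g) ->
  (forall g, G g -> exists h, G h /\ h = pairh g h) ->
  G x0 ->
  simple_group G.
Proof.
  intros HG Hfull Hflex H1 H2 H3 H4 Hx0.
  pose proof HG as (Hhom & Hid & Hcomp & Hinv).
  split.
  - exists x0. split; auto. intro E.
    assert (HH := equal_f E (ccons false (ccons true (fun _ => false)))).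
    assert (HH0 := equal_f HH 0). cbv in HH0. discriminate.
  - intros N HN. destruct (classic (forall n, N n -> n = cid)) as [Hc|Hc]; [left; exact Hc|right].
    apply not_all_ex_not in Hc. destruct Hc as [n0 Hn0].
    apply imply_to_and in Hn0. destruct Hn0 as [Nn0 Hn0ne].
    pose proof HN as [[HNG [HNid [HNc HNi]]] HNn].
    destruct (ne_point n0 Hn0ne) as [x [j Hj]].
    destruct (Hhom n0 (HNG _ Nn0)) as [Hcn0 _]. destruct (Hcn0 x (S j)) as [m Hm].
    set (M := max m (S j)).
    assert (Hdisj : forall y, agree M x y -> ~ agree M x (n0 y)).
    { intros y Hy Hy2. assert (H := Hm y (agree_mono m M x y ltac:(unfold M; lia) Hy)).
      specialize (H j ltac:(lia)). specialize (Hy2 j ltac:(unfold M; lia)). congruence. }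
    destruct (HNi n0 Nn0) as [n0' [Nn0' In0]].
    assert (HCE : comm_prop G N (agree M x)).
    { intros a a' b b' Ga Ga' Ia Gb Gb' Ib Sa Sb.
      exact (stepA G N (agree M x) n0 n0' a a' b b' HN Nn0 Nn0' In0 Hdisj Ga Ga' Ia Gb Gb' Ib Sa Sb). }
    destruct (Hflex (agree 1 p1) (agree M x) (cyl_clopen 1 p1)
       (ex_intro (fun y => agree 1 p1 y) p1 (fun k _ => eq_refl)) (cyl_out 1 p1 ltac:(lia))
       (cyl_clopen M x) (ex_intro (fun y => agree M x y) x (fun k _ => eq_refl))
       (cyl_out M x ltac:(unfold M; lia))) as [t [Gt Ht]].
    destruct (Hinv t Gt) as [t' [Gt' It]].
    assert (HC1 := stepB G N (agree 1 p1) (agree M x) t t' HG HN HCE Gt Gt' It Ht).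
    assert (HAk := Ak_in G N HG H1 H4 Hx0 HC1).
    apply (all_in G N HG HN Hfull).
    exact (supp_in G N HG HN Hflex H2 H3 HAk).
Qed.
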